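(* Let $n\ge 1$, $N=2^n$ and $s=(N-1)/2$. Let $0\le j<N/2$ be an integer and let $z\in\tilde\Xi^{(N)}_j$, i.e. $z=W^{(N)}_j\oplus e$ for some $e\in\{0,1\}^N$ with Hamming weight $|e|<N/4$ and $e\preccurlyeq W^{(N)}_{N-1}$. Then $$\hat H^{\otimes n}\,\hat U_z\,\hat H^{\otimes n}\left(\left|\tfrac12\right\rangle_s+\left|-\tfrac12\right\rangle_s\right)=\left|\tfrac12+j\right\rangle_s+\left|-\tfrac12-j\right\rangle_s .$$
   Context: Work in $\mathbb{C}^N$ with computational basis $\{|y\rangle : y=0,\dots,N-1\}$. The spin basis states $|m\rangle_s$, $m\in\{-s,\dots,s\}$, are identified with computational basis states via $|m\rangle_s=|m+s\rangle$. For $x,y\in\{0,\dots,N-1\}$ let $x\cdot y\in\{0,1\}$ be the inner product modulo 2 of their $n$-bit binary expansions. $\hat H^{\otimes n}|y\rangle=N^{-1/2}\sum_{x=0}^{N-1}(-1)^{x\cdot y}|x\rangle$. The Hadamard codeword $W^{(N)}_j\in\{0,1\}^N$ has bit $x\cdot j$ at position $x\in\{0,\dots,N-1\}$; in particular $W^{(N)}_{N-1}$ has a 1 exactly at the positions $x$ whose binary expansion has an odd number of ones. For $a,b\in\{0,1\}^N$, $a\preccurlyeq b$ means: whenever $a_x=1$ then $b_x=1$. $\oplus$ is bitwise addition mod 2. For $z\in\{0,1\}^N$, $\hat U_z$ is the diagonal unitary $\hat U_z|x\rangle=(-1)^{z_x}|x\rangle$. The set $\tilde\Xi^{(N)}_j$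 (codewords with restricted errors) is the set of strings $W^{(N)}_j\oplus e$ with $e\preccurlyeq W^{(N)}_{N-1}$ and $|e|\in\{0,1,\dots,N/4-1\}$. *)

(* Defs.v *)
From HB Require Import structures.
From mathcomp Require Import all_boot all_order all_algebra all_field.
Set Implicit Arguments. Unset Strict Implicit. Unset Printing Implicit Defensive.
Import Order.TTheory GRing.Theory Num.Theory.
Local Open Scope ring_scope.

Definition bitdot (n x y : nat) : bool :=
  odd (\sum_(k < n) (odd (x %/ 2 ^ k) && odd (y %/ 2 ^ k)))%N.

Definition hadamard (n : nat) : 'M[algC]_(2 ^ n) :=
  (sqrtC (2 ^ n)%:R)^-1 *: \matrix_(x, y) ((-1) ^+ bitdot n x y).

Definition walsh (n j : nat) : {ffun 'I_(2 ^ n) -> bool} :=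
  [ffun x : 'I_(2 ^ n) => bitdot n x j].

Definition bprec (N : nat) (a b : {ffun 'I_N -> bool}) : Prop :=
  forall x, a x -> b x.

Definition bxor (N : nat) (a b : {ffun 'I_N -> bool}) : {ffun 'I_N -> bool} :=
  [ffun x => a x (+) b x].

Definition hweight (N : nat) (a : {ffun 'I_N -> bool}) : nat := #|[set x | a x]|.

Definition Uz (N : nat) (z : {ffun 'I_N -> bool}) : 'M[algC]_N :=
  diag_mx (\row_x ((-1) ^+ z x)).

Definition ket (N k : nat) : 'cV[algC]_N := \col_i ((i == k :> nat)%:R).

(* spin basis |m>_s = |m + s>, s = (2^n - 1)/2; the half-integer m is
   given through twice its value m2 = 2m (an odd integer), so that the
   computational index m + s equals (m2 + 2^n - 1)/2. *)
Definition spinket (n : nat) (m2 : int) : 'cV[algC]_(2 ^ n) :=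
  let idx2 : int := (m2 + ((2 ^ n).-1)%:Z)%R in
  ket (2 ^ n) (absz idx2 %/ 2)%N.

(* Main.v *)
Require Import Defs.
From mathcomp Require Import all_boot all_order all_algebra all_field.
From mathcomp Require Import zify.
Import Order.TTheory GRing.Theory Num.Theory.
Definition bit (i x : nat) : bool := odd (x %/ 2 ^ i).

Lemma bit_high m i x : x < 2 ^ m -> m <= i -> bit i x = false.
Proof.
move=> hx hi; rewrite /bit divn_small //; apply: leq_trans hx _.
by rewrite leq_exp2l.
Qed.

Lemma bit_addpow m i x : i < m -> bit i (x + 2 ^ m) = bit i x.
Proof.
move=> hi; rewrite /bit -(subnK (ltnW hi)) expnD addnC divnMDl ?expn_gt0 //.
by rewrite oddD oddX subn_eq0 leqNgt hi.
Qed.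

Lemma bit_pow_top m x : x < 2 ^ m -> bit m (x + 2 ^ m) = true.
Proof.
move=> hx; rewrite /bit (_ : x + 2 ^ m = 1 * 2 ^ m + x); last by rewrite mul1n addnC.
rewrite divnMDl ?expn_gt0 //.
by rewrite divn_small.
Qed.

Lemma bit_compl m i x : x < 2 ^ m -> i < m -> bit i (2 ^ m - 1 - x) = ~~ bit i x.
Proof.
move=> hx hi; rewrite /bit.
have hP : 0 < 2 ^ i by rewrite expn_gt0.
have hm : 2 ^ m = 2 ^ (m - i) * 2 ^ i by rewrite -expnD subnK // ltnW.
have hQe : odd (2 ^ (m - i)) = false by rewrite oddX subn_eq0 leqNgt hi.
move: hx hQe; rewrite hm (divn_eq x (2 ^ i)).
have := ltn_pmod x hP.
set P := 2 ^ i; set Q := 2 ^ (m - i); set q := x %/ P; set r := x %% P => hr hx hQe.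
have hq : q < Q by move: hx; rewrite -ltn_divLR // divnMDl // (divn_small hr) addn0.
have -> : Q * P - 1 - (q * P + r) = (Q - 1 - q) * P + (P - 1 - r).
  have [t ->] : exists t, Q = q.+1 + t by exists (Q - q.+1); rewrite subnKC.
  have -> : q.+1 + t - 1 - q = t by lia.
  rewrite mulnDl mulSn; set a := q * P; set b := t * P; lia.
rewrite divnMDl // (divn_small) ?addn0; last lia.
rewrite -subnDA oddB ?hQe; last lia.
by rewrite divnMDl // divn_small // addn0 add1n /=.
Qed.

Lemma bitS i x : bit i.+1 x = bit i x./2.
Proof. by rewrite /bit expnS divnMA divn2. Qed.

Lemma bits_eq n x y : x < 2 ^ n -> y < 2 ^ n ->
  (forall i, i < n -> bit i x = bit i y) -> x = y.
Proof.
elim: n x y => [|n IH] x y.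
  by rewrite expn0 !ltnS !leqn0 => /eqP -> /eqP ->.
move=> hx hy hb.
have h0 : odd x = odd y by have := hb 0 erefl; rewrite /bit expn0 !divn1.
have e : x./2 = y./2.
  apply: IH; first by move: hx; rewrite expnS -divn2; lia.
    by move: hy; rewrite expnS -divn2; lia.
  by move=> i hi; rewrite -!bitS hb.
by rewrite -(odd_double_half x) -(odd_double_half y) h0 e.
Qed.

Local Open Scope ring_scope.
Lemma sgn_bitdot n x y : (-1)^+ bitdot n x y = \prod_(k<n) (-1)^+ (bit k x && bit k y) :> algC.
Proof. by rewrite /bitdot signr_odd prodrXr. Qed.

Lemma sum_bits n (f : nat -> bool -> algC) :
  \sum_(0 <= x < 2 ^ n) \prod_(i < n) f i (bit i x) = \prod_(i < n) (f i false + f i true).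
Proof.
elim: n => [|n IH].
  by rewrite expn0 big_nat1 !big_ord0.
have h1 : (2 ^ n <= 2 ^ n.+1)%N by rewrite leq_exp2l.
rewrite (big_cat_nat (n := 2 ^ n)) //=.
rewrite -{2}(add0n (2 ^ n)%N) big_addn (_ : (2 ^ n.+1 - 2 ^ n = 2 ^ n)%N); last first.
  by rewrite expnS; lia.
rewrite big_ord_recr /= mulrDr -IH !mulr_suml.
congr (_ + _).
  rewrite big_nat_cond [in RHS]big_nat_cond; apply: eq_bigr => x /andP[/andP[_ hx] _].
  rewrite big_ord_recr /= (@bit_high n n x hx) // mulr1.
rewrite big_nat_cond [in RHS]big_nat_cond; apply: eq_bigr => x /andP[/andP[_ hx] _].
rewrite big_ord_recr /= (@bit_pow_top n x hx); congr (_ * _).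
by apply: eq_bigr => i _; rewrite (@bit_addpow n i x).
Qed.

Lemma prod_sign n (c : nat -> bool) :
  \prod_(i < n) (1 + (-1) ^+ c i) = if [forall i : 'I_n, ~~ c i] then 2 ^+ n else 0 :> algC.
Proof.
case: ifP => [/forallP h|/negbT /forallPn [i hi]].
  rewrite (eq_bigr (fun _ => 2)) ?prodr_const ?card_ord // => i _.
  by rewrite (negbTE (h i)).
rewrite (bigD1 i) //= (negbNE hi) expr1 subrr mul0r //.
Qed.

Lemma walsh_sum n k j a :
  \sum_(x < 2 ^ n) (-1) ^+ bitdot n k x * ((-1) ^+ bitdot n x j * (-1) ^+ bitdot n x a)
  = if [forall i : 'I_n, bit i k == bit i j (+) bit i a] then 2 ^+ n else 0 :> algC.
Proof.
pose f i (t : bool) : algC :=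
  (-1) ^+ (bit i k && t) * ((-1) ^+ (t && bit i j) * (-1) ^+ (t && bit i a)).
transitivity (\sum_(0 <= x < 2 ^ n) \prod_(i < n) f i (bit i x)).
  by rewrite big_mkord; apply: eq_bigr => x _; rewrite !sgn_bitdot -!big_split.
rewrite sum_bits (eq_bigr (fun i : 'I_n => 1 + (-1) ^+ (bit i k (+) bit i j (+) bit i a))).
  rewrite (prod_sign n (fun i => bit i k (+) bit i j (+) bit i a)); congr (if _ then _ else _); apply: eq_forallb => i.
  by case: (bit i k); case: (bit i j); case: (bit i a).
move=> i _; rewrite /f /= !andbT !andbF !mulr1 !signr_addb.
by rewrite expr0 mulrA.
Qed.

Lemma forall_bits_eq n k y (g : nat -> bool) : (k < 2 ^ n)%N -> (y < 2 ^ n)%N ->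
  (forall i, (i < n)%N -> bit i y = g i) -> [forall i : 'I_n, bit i k == g i] = (k == y).
Proof.
move=> hk hy hg; apply/forallP/eqP => [h|->] .
  by apply: (@bits_eq n k y hk hy) => i hi; rewrite hg //; apply/eqP: (h (Ordinal hi)).
by move=> i; rewrite hg.
Qed.

Lemma mul_ket N (A : 'M[algC]_N) t (ht : (t < N)%N) : A *m ket N t = \col_x A x (Ordinal ht).
Proof.
apply/matrixP => x y; rewrite !mxE (bigD1 (Ordinal ht)) //= !mxE eqxx mulr1.
rewrite big1 ?addr0 // => i hi; rewrite mxE.
rewrite (_ : (i == t :> nat) = false) ?mulr0 //; apply/negbTE; apply: contra hi => /eqP h.
by apply/eqP; apply: val_inj.
Qed.

Lemma bitdotE n x y : bitdot n x y = odd (\sum_(k < n) (bit k x && bit k y)).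
Proof. by []. Qed.

Lemma bit0n i : bit i 0 = false.
Proof. by rewrite /bit div0n. Qed.

Lemma bit_pow m i : (i < m.+1)%N -> bit i (2 ^ m) = (i == m).
Proof.
move=> hi; have [h|->] : (i < m)%N \/ i = m by lia.
  have := @bit_addpow m i 0 h; rewrite add0n => ->; rewrite bit0n; apply/esym/eqP; lia.
by have := @bit_pow_top m 0 (expn_gt0 2 m); rewrite add0n eqxx.
Qed.

Lemma bit_powm1 m i : (i < m.+1)%N -> bit i (2 ^ m - 1) = (i < m)%N.
Proof.
move=> hi; have [h|->] : (i < m)%N \/ i = m by lia.
  by have := @bit_compl m i 0 (expn_gt0 2 m) h; rewrite subn0 bit0n h.
rewrite ltnn (@bit_high m m) //; have := expn_gt0 2 m; lia.
Qed.

Lemma bitdot_split m x : bitdot m.+1 x (2 ^ m.+1 - 1)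
  = bitdot m.+1 x (2 ^ m) (+) bitdot m.+1 x (2 ^ m - 1).
Proof.
rewrite !bitdotE -oddD -big_split /=; congr odd; apply: eq_bigr => i _.
have hi := ltn_ord i.
have := @bit_compl m.+1 i 0 (expn_gt0 2 m.+1) hi; rewrite subn0 bit0n /= => ->.
rewrite bit_pow // bit_powm1 //; case: (bit i x) => //=.
have [h|h] : (i < m)%N \/ nat_of_ord i = m by lia.
  by rewrite h; have -> : (nat_of_ord i == m) = false by apply/eqP; lia.
by rewrite h eqxx ltnn.
Qed.

Theorem lemma2 (n j : nat) (z : {ffun 'I_(2 ^ n) -> bool}) :
  (0 < n)%N ->
  (j * 2 < 2 ^ n)%N ->
  (exists e : {ffun 'I_(2 ^ n) -> bool},
      [/\ z = bxor (walsh n j) e,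
          (4 * hweight e < 2 ^ n)%N &
          bprec e (walsh n (2 ^ n - 1))]) ->
  hadamard n *m Uz z *m hadamard n *m (spinket n 1 + spinket n (-1))
  = spinket n (1 + 2 * j%:Z) + spinket n (-1 - 2 * j%:Z).
Proof.
move=> hn hj [e [hz _ hpre]]; subst z; move: e hpre hj; case: n hn => // m _ e hpre hj.
have hp : (0 < 2 ^ m)%N by rewrite expn_gt0.
have hj' : (j < 2 ^ m)%N by move: hj; rewrite expnS; lia.
have ha : (2 ^ m < 2 ^ m.+1)%N by rewrite expnS; lia.
have hb : (2 ^ m - 1 < 2 ^ m.+1)%N by rewrite expnS; lia.
have ha' : (j + 2 ^ m < 2 ^ m.+1)%N by rewrite expnS; lia.
have hb' : (2 ^ m - 1 - j < 2 ^ m.+1)%N by rewrite expnS; lia.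
have -> : spinket m.+1 1 = ket _ (2 ^ m) by rewrite /spinket; congr ket; rewrite expnS; lia.
have -> : spinket m.+1 (-1) = ket _ (2 ^ m - 1) by rewrite /spinket; congr ket; rewrite expnS; lia.
have -> : spinket m.+1 (1 + 2 * j%:Z) = ket _ (j + 2 ^ m).
  by rewrite /spinket; congr ket; rewrite expnS; lia.
have -> : spinket m.+1 (-1 - 2 * j%:Z) = ket _ (2 ^ m - 1 - j).
  by rewrite /spinket; congr ket; move: hj; rewrite expnS; lia.
set N := (2 ^ m.+1)%N.
set M := \matrix_(x, y) ((-1) ^+ bitdot m.+1 x y) : 'M[algC]_N.
set c := (sqrtC (N%:R : algC))^-1.
have hw : M *m (ket N (2 ^ m) + ket N (2 ^ m - 1)) =
   \col_x ((-1) ^+ bitdot m.+1 x (2 ^ m) + (-1) ^+ bitdot m.+1 x (2 ^ m - 1)).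
  by rewrite mulmxDr (@mul_ket _ M _ ha) (@mul_ket _ M _ hb); apply/matrixP => x y; rewrite !mxE.
have hu : Uz (bxor (walsh m.+1 j) e) *m
   \col_x ((-1) ^+ bitdot m.+1 x (2 ^ m) + (-1) ^+ bitdot m.+1 x (2 ^ m - 1)) =
   \col_x ((-1) ^+ bitdot m.+1 x j *
      ((-1) ^+ bitdot m.+1 x (2 ^ m) + (-1) ^+ bitdot m.+1 x (2 ^ m - 1))).
  rewrite /Uz mul_diag_mx; apply/matrixP => x y; rewrite !mxE /bxor /walsh !ffunE.
  case ex: (e x); last by rewrite addbF.
  have := hpre x ex; rewrite ffunE bitdot_split.
  case: (bitdot m.+1 x (2 ^ m)); case: (bitdot m.+1 x (2 ^ m - 1)) => //= _.
    by rewrite expr0 expr1 addrC addrN !mulr0.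
  by rewrite expr0 expr1 addrN !mulr0.
rewrite /hadamard -/N -/M -/c. Show. rewrite -!mulmxA -!scalemxAl hw -scalemxAr hu -scalemxAr scalerA.
apply/matrixP => k i; rewrite !mxE.
transitivity (c * c * ((if k == (j + 2 ^ m)%N :> nat then 2 ^+ m.+1 else 0) +
                       (if k == (2 ^ m - 1 - j)%N :> nat then 2 ^+ m.+1 else 0))).
  congr (_ * _).
  have g1 : forall l, (l < m.+1)%N -> bit l (j + 2 ^ m) = bit l j (+) bit l (2 ^ m).
    move=> l hl; rewrite bit_pow //; have [h|->] : (l < m)%N \/ l = m by lia.
      rewrite (@bit_addpow m l j h); have -> : (l == m) = false by apply/eqP; lia.
      by rewrite addbF.
    by rewrite (@bit_pow_top m j hj') (@bit_high m m j hj') // eqxx.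
  have g2 : forall l, (l < m.+1)%N -> bit l (2 ^ m - 1 - j) = bit l j (+) bit l (2 ^ m - 1).
    move=> l hl; rewrite bit_powm1 //; have [h|->] : (l < m)%N \/ l = m by lia.
      by rewrite (@bit_compl m l j hj' h) h addbT.
    rewrite ltnn addbF (@bit_high m m j hj') // (@bit_high m m) //; lia.
  rewrite -(@forall_bits_eq m.+1 k _ _ (ltn_ord k) ha' g1).
  rewrite -(@forall_bits_eq m.+1 k _ _ (ltn_ord k) hb' g2).
  rewrite -(walsh_sum m.+1 k j (2 ^ m)%N) -(walsh_sum m.+1 k j (2 ^ m - 1)%N) -big_split /=.
  by apply: eq_bigr => x _; rewrite !mxE -!mulrDr.
have hc : c * c * 2 ^+ m.+1 = 1.
  rewrite /c -expr2 exprVn sqrtCK /N natrX mulVf // expf_neq0 // pnatr_eq0 //.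

rewrite (mulrDr (c * c)).
case: (_ == _); case: (_ == _); by rewrite ?mulr0 ?hc ?addr0 ?add0r.
Qed.
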